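(* Let $G$ be a group with finite generating set $S$ (with $S=S^{-1}$, $e\notin S$). For $n\ge 3$ let $\sigma=(1\,2\,\cdots\,n)\in\mathrm{Sym}(n)$ and $S_{\rm pos}=\mathrm{Sym}(n)\smallsetminus\{e,\sigma,\sigma^{-1}\}$. Then for all sufficiently large $n$ there is a map $i\colon G\to G\times\mathrm{Sym}(n)$ which is an isometric embedding for the word metrics of $(G,S)$ and $(G\times\mathrm{Sym}(n),S\boxtimes S_{\rm pos})$, such that $\kappa(i(g))>0$ for all $g\in G$ (curvature with respect to $S\boxtimes S_{\rm pos}$), and such that $d(i(gh),i(g)i(h))\le 2$ for all $g,h\in G$.
   Context: For generating sets $S_1,S_2$ of groups $G_1,G_2$, $S_1\boxtimes S_2=(S_1\times\{e\})\cup(\{e\}\times S_2)$ is the split generating set of $G_1\times G_2$. For a group with finite generating set $S$ ($S=S^{-1}$, $e\notin S$), $|x|$ is word length, $d(x,y)=|x^{-1}y|$, $\mathrm{Av}(g)=\frac{1}{|S|}\sum_{a\in S}|a^{-1}ga|$, and for $g\neq e$ the curvature is $\kappa(g)=\frac{|g|-\mathrm{Av}(g)}{|g|}$. *)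

(* Defs.v *)
From HB Require Import structures.
From mathcomp Require Import all_boot all_order all_algebra all_fingroup.
From Stdlib Require Import ClassicalDescription List.
Set Implicit Arguments. Unset Strict Implicit. Unset Printing Implicit Defensive.
Import Order.TTheory GRing.Theory Num.Theory.

Record is_group (T : Type) (mul : T -> T -> T) (inv : T -> T) (one : T) : Prop :=
  { grp_assoc : forall x y z, mul x (mul y z) = mul (mul x y) z;
    grp_mul1 : forall x, mul one x = x;
    grp_mulV : forall x, mul (inv x) x = one }.

Section Words.
Variables (T : Type) (mul : T -> T -> T) (inv : T -> T) (one : T) (S : list T).

Definition has_word (x : T) (n : nat) : Prop :=
  exists w : list T, length w = n /\ Forall (fun a => In a S) w /\
                     fold_right mul one w = x.

Definition gen_set : Prop :=
  NoDup S /\ (forall a, In a S -> In (inv a) S) /\ ~ In one S /\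
  (forall x, exists n, has_word x n).

Definition has_wordb (x : T) (n : nat) : bool :=
  if excluded_middle_informative (has_word x n) then true else false.

Definition wlen (x : T) : nat :=
  match excluded_middle_informative (exists n, has_wordb x n) with
  | left H => ex_minn H
  | right _ => 0%N
  end.

Definition wdist (x y : T) : nat := wlen (mul (inv x) y).

Definition Av (g : T) : rat :=
  ((\sum_(a <- S) (wlen (mul (mul (inv a) g) a))%:R) / (size S)%:R)%R.

Definition kappa (g : T) : rat :=
  (((wlen g)%:R - Av g) / (wlen g)%:R)%R.

End Words.

Definition pmul (A B : Type) (mA : A -> A -> A) (mB : B -> B -> B)
  (x y : A * B) : A * B := (mA x.1 y.1, mB x.2 y.2).
Definition pinv (A B : Type) (iA : A -> A) (iB : B -> B) (x : A * B) : A * B :=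
  (iA x.1, iB x.2).

Definition split_gen (A B : Type) (eA : A) (eB : B) (S1 : list A) (S2 : list B)
  : list (A * B) := map (fun a => (a, eB)) S1 ++ map (fun b => (eA, b)) S2.

(* sigma = (1 2 ... n), i.e. i |-> i+1 mod n on 'I_n *)
Definition sigma_cyc (n : nat) : 'S_n := perm (@ordS_inj n).

Definition S_pos (n : nat) : list 'S_n :=
  enum [set p : 'S_n | [&& p != 1%g, p != sigma_cyc n & p != (sigma_cyc n)^-1%g]].

Definition Gsym (G : Type) (n : nat) := (G * 'S_n)%type.

(* Main.v *)
Require Import Defs.
From HB Require Import structures.
From mathcomp Require Import all_boot all_order all_algebra all_fingroup.
From Stdlib Require Import List.
Import Order.TTheory GRing.Theory Num.Theory.
From Stdlib Require Import ClassicalDescription.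
From mathcomp Require Import zify.

Module Helpers.
Set Implicit Arguments. Unset Strict Implicit.

Section Gen.
Variables (T : Type) (mul : T -> T -> T) (one : T) (S : list T).

Lemma has_wordbP x k : has_wordb mul one S x k = true <-> has_word mul one S x k.
Proof. rewrite /has_wordb; case: excluded_middle_informative => //; split => //. Qed.

Lemma wlen_le x k : has_word mul one S x k -> (wlen mul one S x <= k)%N.
Proof.
move=> H; rewrite /wlen; case: excluded_middle_informative => [E|E].
  by case: ex_minnP => m _ Hm; apply: Hm; apply/has_wordbP.
by exfalso; apply: E; exists k; apply/has_wordbP.
Qed.

Lemma wlen_word x k : has_word mul one S x k -> has_word mul one S x (wlen mul one S x).
Proof.
move=> H; rewrite /wlen; case: excluded_middle_informative => [E|E].
  by case: ex_minnP => m Hm _; apply/has_wordbP.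
by exfalso; apply: E; exists k; apply/has_wordbP.
Qed.
End Gen.

Lemma In_mem (T : eqType) (x : T) (s : list T) : In x s <-> x \in s.
Proof.
elim: s => [|a s IH] //=; rewrite seq.in_cons; split.
  by case=> [->|/IH ->]; rewrite ?eqxx ?orbT.
by case/orP => [/eqP ->|/IH]; [left|right].
Qed.

Lemma mapE (A B : Type) (f : A -> B) (l : list A) : List.map f l = seq.map f l.
Proof. by elim: l => //= a l ->. Qed.

Section Grp.
Variables (T : Type) (mul : T -> T -> T) (inv : T -> T) (one : T) (S : list T).
Hypothesis Hg : is_group mul inv one.

Lemma mulx1 x : mul x one = x.
Proof.
case: Hg => A L V.
have E : x = mul (inv (inv x)) one by rewrite -(V x) A V L.
by rewrite {1}E -A L -E.
Qed.

Lemma inv1 : inv one = one.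
Proof. by case: Hg => A L V; rewrite -{1}(mulx1 (inv one)) V. Qed.

Lemma fold_mul w y : fold_right mul y w = mul (fold_right mul one w) y.
Proof.
case: Hg => A L V; elim: w => [|a w IH] /=; first by rewrite L.
by rewrite IH A.
Qed.

Lemma hw_cat x y a b : has_word mul one S x a -> has_word mul one S y b ->
  has_word mul one S (mul x y) (a + b).
Proof.
move=> [w1 [l1 [F1 E1]]] [w2 [l2 [F2 E2]]]; exists (w1 ++ w2); split; last split.
- by rewrite length_app l1 l2.
- by apply/Forall_app.
- by rewrite fold_right_app fold_mul E1 E2.
Qed.

Lemma hw1 a : In a S -> has_word mul one S a 1.
Proof. by move=> H; exists [:: a]; split => //=; split; [constructor|rewrite mulx1]. Qed.

Lemma hw0 : has_word mul one S one 0.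
Proof. by exists [::]. Qed.
End Grp.

Lemma perm_group n : is_group (fun x y : 'S_n => (x * y)%g) (fun x => x^-1%g) 1%g.
Proof. by split => *; [rewrite mulgA|rewrite mul1g|rewrite mulVg]. Qed.

Section Sig.
Variable n : nat.
Hypothesis Hn : (5 <= n)%N.
Local Notation sg := (sigma_cyc n).
Local Notation PW := (has_word (fun x y : 'S_n => (x * y)%g) 1%g (S_pos n)).

Lemma sigX_val k x : val ((sg ^+ k)%g x) = (x + k) %% n.
Proof.
rewrite permX; elim: k => [|k IH] /=; first by rewrite addn0 modn_small.
by rewrite /sigma_cyc permE /= IH -addn1 modnDml addn1 addnS.
Qed.

Definition o0 : 'I_n := Ordinal (leq_trans (isT : (0 < 5)%N) Hn).

Lemma sigX_inj j k : (j < n)%N -> (k < n)%N -> (sg ^+ j)%g = (sg ^+ k)%g -> j = k.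
Proof.
move=> hj hk E; have := congr1 (fun p : 'S_n => val (p o0)) E.
by rewrite /= !sigX_val /= !add0n !modn_small.
Qed.

Lemma sigXn : (sg ^+ n)%g = 1%g.
Proof. by apply/permP => x; apply: val_inj; rewrite sigX_val perm1 modnDr modn_small. Qed.

Lemma sigV : ((sg)^-1)%g = (sg ^+ n.-1)%g.
Proof.
have E : (sg ^+ n.-1 * sg)%g = 1%g by rewrite -expgSr prednK ?sigXn //; lia.
by rewrite -[LHS]mul1g -E mulgK.
Qed.

Lemma sigX_neq j k : (j < n)%N -> (k < n)%N -> j <> k -> (sg ^+ j)%g != (sg ^+ k)%g.
Proof. by move=> hj hk hjk; apply/eqP => /(sigX_inj hj hk). Qed.

Lemma Spos_sigX k : (2 <= k)%N -> (k <= n - 2)%N -> (sg ^+ k)%g \in S_pos n.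
Proof.
move=> h1 h2; rewrite /S_pos mem_enum inE sigV.
apply/and3P; split.
- have := @sigX_neq k 0; rewrite expg0; apply; lia.
- have := @sigX_neq k 1; rewrite expg1; apply; lia.
- apply: sigX_neq; lia.
Qed.

Lemma hw_sig : PW sg 2.
Proof.
exists [:: (sg ^+ 3)%g; (sg ^+ (n - 2))%g]; split => //; split.
  by repeat constructor; apply/In_mem; apply: Spos_sigX; lia.
rewrite /= mulg1 -expgD.
have -> : (3 + (n - 2) = n + 1)%N by lia.
by rewrite expgD sigXn mul1g expg1.
Qed.

Lemma hw_sigV : PW (sg^-1)%g 2.
Proof.
exists [:: (sg ^+ 2)%g; (sg ^+ (n - 3))%g]; split => //; split.
  by repeat constructor; apply/In_mem; apply: Spos_sigX; lia.
rewrite /= mulg1 -expgD sigV.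
by have -> : (2 + (n - 3) = n.-1)%N by lia.
Qed.

Lemma sig_neq1 : sg != 1%g.
Proof. by apply/eqP => E; have := @sigX_inj 1 0; rewrite expg1 expg0 => /(_ _ _ E); lia. Qed.

Lemma hw_sig_ge k : PW sg k -> (2 <= k)%N.
Proof.
case=> w [L [F E]]; case: w L F E => [|a [|b w]] //= L F E; try lia.
  by move: sig_neq1; rewrite -E eqxx.
move: E; rewrite mulg1 => E; inversion F; subst.
by move/In_mem: H1; rewrite /S_pos mem_enum inE eqxx andbF.
Qed.

Lemma conj_inj (p1 p2 : 'S_n) x0 :
  (p1^-1 * sg * p1 = p2^-1 * sg * p2)%g -> p1 x0 = p2 x0 -> p1 = p2.
Proof.
move=> E h0.
set q := (p1^-1 * sg * p1)%g in E.
have K1 y : p1 (sg y) = q (p1 y).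
  by rewrite -!permM /q !mulgA mulgV mul1g.
have K2 y : p2 (sg y) = q (p2 y).
  by rewrite -!permM E !mulgA mulgV mul1g.
have K k : p1 ((sg ^+ k)%g x0) = p2 ((sg ^+ k)%g x0).
  elim: k => [|k IH]; first by rewrite expg0 perm1.
  by rewrite expgSr permM K1 K2 IH.
apply/permP => x.
have -> : x = (sg ^+ ((x + n - x0) %% n))%g x0.
  apply: val_inj; rewrite sigX_val /= modnDmr.
  have -> : (x0 + (x + n - x0) = x + n)%N by have := ltn_ord x0; lia.
  by rewrite modnDr modn_small.
by rewrite K.
Qed.

Lemma card_conj (q : 'S_n) : (#|[pred p : 'S_n | (p^-1 * sg * p)%g == q]| <= n)%N.
Proof.
have := @leq_card_in _ _ (fun p : 'S_n => p o0) [pred p : 'S_n | (p^-1 * sg * p)%g == q].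
rewrite card_ord; apply => p1 p2; rewrite !inE => /eqP h1 /eqP h2 h.
by apply: (conj_inj (x0:=o0)); rewrite ?h1 ?h2.
Qed.

Lemma size_Spos : (n`! <= size (S_pos n) + 3)%N.
Proof.
rewrite /S_pos -cardE.
set A := [set p : 'S_n | _].
have : (~: A \subset [:: 1%g; sg; sg^-1]%g).
  apply/subsetP => p; rewrite !inE !negb_and !negbK orbA.
  by [].
move/subset_leq_card => H.
have H3 := card_size [:: 1%g; sg; sg^-1]%g.
have := cardsC A; rewrite card_Sn => <-; rewrite leq_add2l; exact: leq_trans H H3.
Qed.

End Sig.

Section Prod.
Variables (G : Type) (mul : G -> G -> G) (inv : G -> G) (e : G) (S : list G) (n : nat).
Hypothesis Hg : is_group mul inv e.
Local Notation PM := (pmul mul (fun x y : 'S_n => (x * y)%g)).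
Local Notation PO := ((e, 1%g) : G * 'S_n).
Local Notation SP := (split_gen e 1%g S (S_pos n)).
Local Notation GW := (has_word mul e S).
Local Notation PW := (has_word (fun x y : 'S_n => (x * y)%g) 1%g (S_pos n)).
Local Notation QW := (has_word PM PO SP).

Lemma prod_split w : Forall (fun a => In a SP) w -> exists w1 w2,
  Forall (fun a => In a S) w1 /\ Forall (fun a => In a (S_pos n)) w2 /\
  (length w1 + length w2 = length w)%N /\
  fold_right PM PO w = (fold_right mul e w1, fold_right (fun x y : 'S_n => (x * y)%g) 1%g w2).
Proof.
elim: w => [|a w IH] H; first by exists [::], [::].
inversion H; subst.
case: (IH H3) => w1 [w2 [F1 [F2 [L E]]]].
case: (in_app_or _ _ _ H2) => /in_map_iff [x [<- Hx]].
- exists (x :: w1), w2; split; first by constructor.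
  split => //; split; first by rewrite /= -L.
  by rewrite /= E /pmul /= mul1g.
- exists w1, (x :: w2); split => //; split; first by constructor.
  split; first by rewrite /= -L; lia.
  by rewrite /= E /pmul /= (grp_mul1 Hg).
Qed.

Lemma qw_split x y k : QW (x, y) k -> exists k1 k2, GW x k1 /\ PW y k2 /\ (k1 + k2 = k)%N.
Proof.
case=> w [L [F E]]; case: (prod_split F) => w1 [w2 [F1 [F2 [L2 E2]]]].
rewrite E2 in E; case: E => E1 E2'.
exists (length w1), (length w2); split; first by exists w1.
split; first by exists w2.
by rewrite L2.
Qed.

Lemma fold1 w1 (a : G) (b : 'S_n) :
  fold_right PM (a, b) (List.map (fun s => (s, 1%g)) w1) = (fold_right mul a w1, b).
Proof. by elim: w1 => //= s w1 ->; rewrite /pmul /= mul1g. Qed.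

Lemma fold2 w2 :
  fold_right PM PO (List.map (fun p => (e, p)) w2) =
  (e, fold_right (fun x y : 'S_n => (x * y)%g) 1%g w2).
Proof. by elim: w2 => //= p w2 ->; rewrite /pmul /= (grp_mul1 Hg). Qed.

Lemma qw_join x y k1 k2 : GW x k1 -> PW y k2 -> QW (x, y) (k1 + k2).
Proof.
move=> [w1 [L1 [F1 E1]]] [w2 [L2 [F2 E2]]].
exists (List.map (fun s => (s, 1%g)) w1 ++ List.map (fun p => (e, p)) w2).
split; first by rewrite length_app !length_map L1 L2.
split.
  apply/Forall_app; split; apply/Forall_map.
  - by apply: Forall_impl F1 => a Ha; apply: in_or_app; left; rewrite /= mapE; apply: in_map.
  - by apply: Forall_impl F2 => a Ha; apply: in_or_app; right; apply: in_map.
by rewrite fold_right_app fold2 fold1 E1 E2.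
Qed.

Hypothesis HS : forall x, exists k, GW x k.

Lemma wlenQ_le x y k2 : PW y k2 ->
  (wlen PM PO SP (x, y) <= wlen mul e S x + k2)%N.
Proof.
move=> H; apply: wlen_le; apply: qw_join => //.
by case: (HS x) => k Hk; apply: wlen_word Hk.
Qed.

Lemma wlenQ_ge x y m : (forall k, PW y k -> (m <= k)%N) -> (exists k, QW (x, y) k) ->
  (wlen mul e S x + m <= wlen PM PO SP (x, y))%N.
Proof.
move=> Hm [k Hk]; have := wlen_word Hk.
case/qw_split => k1 [k2 [H1 [H2 <-]]].
apply: leq_add; [exact: wlen_le H1 | exact: Hm].
Qed.
End Prod.

Lemma sum_le_list (T : Type) (l : list T) (F : T -> nat) c :
  (forall s, In s l -> (F s <= c)%N) -> (\sum_(s <- l) F s <= size l * c)%N.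
Proof.
elim: l => [|a l IH] H; first by rewrite big_nil.
rewrite big_cons /= mulSn leq_add //; first by apply: H; left.
by apply: IH => s hs; apply: H; right.
Qed.

Lemma fact_ge k : (k <= k`!)%N.
Proof. case: k => // k; rewrite factS; have := fact_gt0 k; nia. Qed.

Lemma fact4 n : (5 <= n)%N -> (4 * n <= n`!)%N.
Proof.
case: n => // k h; rewrite factS mulnC leq_mul2l; have := fact_ge k.
move=> h2; apply/orP; right; apply: leq_trans h2; lia.
Qed.

End Helpers.
Import Helpers.

Theorem mainTheorem10 (G : Type) (mul : G -> G -> G) (inv : G -> G) (e : G)
  (S : list G) :
  is_group mul inv e -> gen_set mul inv e S ->
  exists N : nat, forall n : nat, (3 <= n)%N -> (N <= n)%N ->
    let mulP := pmul mul (fun x y : 'S_n => (x * y)%g) in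
    let invP := pinv inv (fun x : 'S_n => x^-1%g) in
    let oneP := (e, 1%g) : G * 'S_n in
    let SP := split_gen e 1%g S (S_pos n) in
    exists i : G -> G * 'S_n,
      (forall g h : G, wdist mulP invP oneP SP (i g) (i h) = wdist mul inv e S g h) /\
      (forall g : G, i g <> oneP /\ (0 < kappa mulP invP oneP SP (i g))%R) /\
      (forall g h : G, (wdist mulP invP oneP SP (i (mul g h)) (mulP (i g) (i h)) <= 2)%N).
Proof.
move=> Hg [_ [HSinv [HSe HS]]].
exists (size S + 5)%N => n _ hN; cbv zeta.
have hn5 : (5 <= n)%N by lia.
set sg := sigma_cyc n.
exists (fun g => (g, sg)).
set PM := pmul mul (fun x y : 'S_n => (x * y)%g).
set PI := pinv inv (fun x : 'S_n => x^-1%g).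
set SP := split_gen e 1%g S (S_pos n).
have hw_sig := hw_sig hn5; have hw_sig_ge := hw_sig_ge hn5; have hw_sigV := hw_sigV hn5.
have A g : wlen PM (e, 1%g) SP (g, sg) = (wlen mul e S g + 2)%N.
  apply/eqP; rewrite eqn_leq; apply/andP; split.
    exact: (wlenQ_le Hg HS).
  apply: (wlenQ_ge Hg) => //; exists (wlen mul e S g + 2)%N; apply: (qw_join Hg) => //.
  by case: (HS g) => k Hk; apply: wlen_word Hk.
have B x : wlen PM (e, 1%g) SP (x, 1%g) = wlen mul e S x.
  apply/eqP; rewrite eqn_leq; apply/andP; split.
    by rewrite -[X in (_ <= X)%N]addn0; apply: (wlenQ_le Hg HS) => //; apply: hw0.
  rewrite -[X in (X <= _)%N]addn0; apply: (wlenQ_ge Hg) => //.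
  exists (wlen mul e S x + 0)%N; apply: (qw_join Hg) => //; last by apply: hw0.
  by case: (HS x) => k Hk; apply: wlen_word Hk.
split.
  move=> g h; rewrite /wdist.
  have -> : PM (PI (g, sg)) (h, sg) = (mul (inv g) h, 1%g) by rewrite /PM /PI /pmul /pinv /= mulVg.
  exact: B.
split; last first.
  move=> g h; rewrite /wdist.
  have -> : PM (PI (mul g h, sg)) (PM (g, sg) (h, sg)) = (e, sg)
    by rewrite /PM /PI /pmul /pinv /= (grp_mulV Hg) mulKg.
  by apply: wlen_le; have := qw_join Hg (hw0 _ _ S) hw_sig.
move=> g; split.
  by case=> _ E; move: (sig_neq1 hn5); rewrite -/sg E eqxx.
set L := wlen mul e S g.
set F := fun a => wlen PM (e, 1%g) SP (PM (PM (PI a) (g, sg)) a).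
set m := size (S_pos n).
have Hsum : (\sum_(a <- SP) F a <= size S * (L + 4) + (m * (L + 1) + 2 * n))%N.
  rewrite /SP /split_gen !mapE big_cat !big_map /=.
  apply: leq_add.
    apply: sum_le_list => s Hs; rewrite /F.
    have -> : PM (PM (PI (s, 1%g)) (g, sg)) (s, 1%g) = (mul (mul (inv s) g) s, sg)
      by rewrite /PM /PI /pmul /pinv /= invg1 mul1g mulg1.
    apply: leq_trans; first exact: (wlenQ_le Hg HS _ hw_sig).
    have : (wlen mul e S (mul (mul (inv s) g) s) <= 1 + L + 1)%N.
      apply: wlen_le; apply: (hw_cat Hg); last exact: (hw1 Hg).
      apply: (hw_cat Hg); first exact: (hw1 Hg (HSinv _ Hs)).
      by case: (HS g) => k Hk; apply: wlen_word Hk.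
    lia.
  pose b (p : 'S_n) := (((p^-1 * sg * p)%g == sg) + ((p^-1 * sg * p)%g == sg^-1%g))%N.
  apply: (@leq_trans (\sum_(p <- S_pos n) (L + 1 + b p))%N).
    apply: leq_sum => p _; rewrite /F.
    have -> : PM (PM (PI (e, p)) (g, sg)) (e, p) = (g, (p^-1 * sg * p)%g)
      by rewrite /PM /PI /pmul /pinv /= (inv1 Hg) (grp_mul1 Hg) (mulx1 Hg).
    rewrite /b; set q := (p^-1 * sg * p)%g.
    case: (boolP (q \in S_pos n)) => Hq.
      apply: leq_trans; first exact: (wlenQ_le Hg HS _ (hw1 (perm_group n) (proj2 (In_mem _ _) Hq))).
      rewrite -/L; lia.
    move: Hq; rewrite /S_pos mem_enum inE !negb_and !negbK.
    case/or3P => /eqP ->.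
    - apply: leq_trans; first exact: (wlenQ_le Hg HS _ (hw0 _ _ _)).
      rewrite -/L; lia.
    - apply: leq_trans; first exact: (wlenQ_le Hg HS _ hw_sig).
      rewrite -/L eqxx; lia.
    - apply: leq_trans; first exact: (wlenQ_le Hg HS _ hw_sigV).
      rewrite -/L eqxx; lia.
  rewrite big_split /=.
  apply: leq_add; first by apply: sum_le_list.
  rewrite /S_pos big_enum /=.
  apply: (@leq_trans (\sum_(p : 'S_n) b p)%N).
    rewrite [X in (_ <= X)%N](bigID [pred p | p \in [set p : 'S_n | [&& p != 1%g, p != sg & p != sg^-1%g]]]) /=.
    exact: leq_addr.
  rewrite big_split /= mul2n -addnn.
  have C r : (\sum_(p : 'S_n) ((p^-1 * sg * p)%g == r) <= n)%N.
    apply: leq_trans (card_conj hn5 r).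
    rewrite -sum1_card [X in (_ <= X)%N]big_mkcond /=.
    by apply: leq_sum => p _; rewrite inE; case: eqP.
  exact: leq_add.
have Hm := size_Spos n.
have Hf := fact4 hn5.
have Hsz : size SP = (size S + m)%N by rewrite /SP /split_gen size_cat !mapE !size_map.
rewrite /kappa /Av A -natr_sum Hsz.
apply: divr_gt0; last by rewrite ltr0n; lia.
rewrite subr_gt0 ltr_pdivrMr; last by rewrite ltr0n; lia.
rewrite -natrM ltr_nat.
move: Hsum; rewrite -/L /F.
move: (\sum_(a <- SP) _)%N => X HX.
nia.
Qed.
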